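(* There exists no $\mathbb{N}$-rational sequence $x_1, x_2, \dots$ such that $x_{8n+1} > x_{9n+2}$ for all $n \geq 1$.
   Context: $\mathbb{N}=\{0,1,2,\dots\}$. A sequence $x_1, x_2, \dots \in \mathbb{N}$ is called $\mathbb{N}$-rational if there exist a dimension $d \geq 1$, a matrix $M \in \mathbb{N}^{d\times d}$ and vectors $v, w \in \mathbb{N}^d$ such that $x_n = v^{\top} M^n w$ for all $n \geq 1$. *)

(* Defs.v *)
From mathcomp Require Import all_boot all_algebra.
Set Implicit Arguments. Unset Strict Implicit. Unset Printing Implicit Defensive.
Import GRing.Theory.
Local Open Scope ring_scope.

Definition N_rational (x : nat -> nat) : Prop :=
  exists (d : nat) (M : 'M[nat]_d.+1) (v : 'rV[nat]_d.+1) (w : 'cV[nat]_d.+1),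
    forall n : nat, (0 < n)%N -> x n = (v *m (M ^+ n) *m w) ord0 ord0.

(* Main.v *)
Require Import Defs.
From mathcomp Require Import all_boot all_algebra zify.
From Stdlib Require Import Classical ClassicalEpsilon.
Set Implicit Arguments. Unset Strict Implicit. Unset Printing Implicit Defensive.
Import GRing.Theory.
Local Open Scope ring_scope.

Definition mxle m p (A B : 'M[nat]_(m,p)) := forall i j, (A i j <= B i j)%N.

Lemma mxle_refl m p (A : 'M[nat]_(m,p)) : mxle A A.
Proof. by move=> i j. Qed.

Lemma mxle_mul m p r (A A' : 'M[nat]_(m,p)) (B B' : 'M[nat]_(p,r)) :
  mxle A A' -> mxle B B' -> mxle (A *m B) (A' *m B').
Proof.
move=> HA HB i j; rewrite !mxE; apply: leq_sum => k _; exact: leq_mul.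
Qed.

Lemma mxle_add m p (A A' B B' : 'M[nat]_(m,p)) :
  mxle A A' -> mxle B B' -> mxle (A + B) (A' + B').
Proof. move=> HA HB i j; rewrite !mxE; exact: leq_add. Qed.

Lemma mulE n (A B : 'M[nat]_n.+1) i j : (A * B) i j = (\sum_k A i k * B k j)%N.
Proof. by rewrite -mulmxE mxE. Qed.

Lemma oneE n (i j : 'I_n.+1) : (1 : 'M[nat]_n.+1) i j = (i == j)%N.
Proof. by rewrite mxE natn. Qed.

Lemma sum_pos n (F : 'I_n.+1 -> nat) l : (0 < F l)%N -> (0 < \sum_k F k)%N.
Proof. move=> H; rewrite (bigD1 l) //=; exact: leq_trans H (leq_addr _ _). Qed.

Lemma mul_pos n (A B : 'M[nat]_n.+1) i l j :
  (0 < A i l)%N -> (0 < B l j)%N -> (0 < (A * B)%R i j)%N.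
Proof. move=> H1 H2; rewrite mulE; apply: (@sum_pos _ _ l); by rewrite muln_gt0 H1 H2. Qed.

Lemma pos_mul n (A B : 'M[nat]_n.+1) i j :
  (0 < (A * B)%R i j)%N -> exists l, (0 < A i l)%N /\ (0 < B l j)%N.
Proof.
rewrite mulE => H; apply: NNPP => Hn.
have : (\sum_k A i k * B k j = 0)%N.
  apply: big1 => k _; apply/eqP; rewrite muln_eq0.
  apply: contraT; rewrite negb_or -!lt0n => /andP[h1 h2].
  by exfalso; apply: Hn; exists k.
by move=> E; rewrite E in H.
Qed.

Lemma walk_of n (A : 'M[nat]_n.+1) q i j : (0 < (A ^+ q) i j)%N ->
  exists f : nat -> 'I_n.+1, [/\ f 0%N = i, f q = j &
     forall k, (k < q)%N -> (0 < A (f k) (f k.+1))%N].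
Proof.
elim: q j => [|q IH] j.
  rewrite expr0 oneE lt0b => /eqP <-; exists (fun _ => i); split => //.
rewrite exprSr => /pos_mul [l [H1 H2]].
have [f [f0 fq fk]] := IH l H1.
exists (fun k => if (k <= q)%N then f k else j); split.
- by rewrite leq0n.
- by rewrite ltnn.
move=> k; rewrite ltnS => kq; rewrite kq /=.
case: (ltngtP k q) => [kq'|kq'|->].
- exact: fk.
- by move: kq; rewrite leqNgt kq'.
- by rewrite fq.
Qed.

Lemma seg_pos n (A : 'M[nat]_n.+1) q (f : nat -> 'I_n.+1) :
  (forall k, (k < q)%N -> (0 < A (f k) (f k.+1))%N) ->
  forall a c, (a + c <= q)%N -> (0 < (A ^+ c) (f a) (f (a + c)%N))%N.
Proof.
move=> Hf a; elim => [|c IH] Hc.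
  by rewrite expr0 oneE addn0 eqxx.
rewrite exprSr; apply: (mul_pos (l := f (a + c)%N)).
  by apply: IH; rewrite (leq_trans _ Hc) // addnS.
by rewrite addnS; apply: Hf; rewrite -addnS.
Qed.

Lemma nilp n (N : 'M[nat]_n.+1) :
  (forall l c, (0 < c)%N -> (N ^+ c) l l = 0%N) -> N ^+ n.+1 = 0.
Proof.
move=> H; apply/matrixP => i j; rewrite [RHS]mxE.
case: (posnP ((N ^+ n.+1) i j)) => // Hp.
have [f [f0 fq fk]] := walk_of Hp.
pose g (k : 'I_n.+2) := f k.
have : ~ injective g.
  move=> /leq_card; by rewrite !card_ord ltnn.
move=> Hni; exfalso; apply: Hni => a b Hab.
apply: NNPP => Hne.
wlog lab : a b Hab Hne / (a < b)%N.
  move=> W; case: (ltngtP a b) => [h|h|h]; first exact: (W a b).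
    by apply: (W b a) => // e; apply: Hne.
  by apply: Hne; apply: val_inj.
have := seg_pos fk (a := a) (c := (b - a)%N).
rewrite subnKC; last exact: ltnW.
move=> /(_ (ltn_ord b)); rewrite -/(g a) -/(g b) Hab H //.
by rewrite subn_gt0.
Qed.

Lemma mxle_mulr n (A A' B B' : 'M[nat]_n.+1) :
  mxle A A' -> mxle B B' -> mxle (A * B) (A' * B').
Proof. rewrite -!mulmxE; exact: mxle_mul. Qed.

Lemma mxle_pow n (A B : 'M[nat]_n.+1) c : mxle A B -> mxle (A ^+ c) (B ^+ c).
Proof.
move=> H; elim: c => [|c IH]; first by rewrite !expr0; exact: mxle_refl.
rewrite !exprS; exact: mxle_mulr.
Qed.

Lemma invariant n (M Dc Dn : 'M[nat]_n.+1) P :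
  Dc + Dn = 1 -> mxle Dc (Dc * M ^+ P) ->
  forall k m, exists S S', [/\ mxle S S',
     M ^+ (k + m) = S + (Dn * M) ^+ k * M ^+ m &
     M ^+ (k + m + P) = S' + (Dn * M) ^+ k * M ^+ (m + P)].
Proof.
move=> HD HP; elim => [|k IH] m.
  exists 0, 0; split; first exact: mxle_refl.
  - by rewrite add0r expr0 mul1r add0n.
  - by rewrite add0r expr0 mul1r add0n.
have [S [S' [HS E1 E2]]] := IH m.+1.
exists (S + (Dn * M) ^+ k * Dc * M ^+ m.+1),
       (S' + (Dn * M) ^+ k * Dc * M ^+ (m.+1 + P)); split.
- apply: mxle_add => //.
  rewrite [(m.+1 + P)%N]addnC exprD mulrA.
  apply: mxle_mulr; last exact: mxle_refl.
  rewrite -mulrA; apply: mxle_mulr; first exact: mxle_refl.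
  exact: HP.
- rewrite addSnnS E1 -addrA; congr (_ + _).
  rewrite [(Dn * M) ^+ k.+1]exprSr [M ^+ m.+1]exprS.
  by rewrite -[X in _ * (X * _) = _](mul1r M) -HD !mulrDl !mulrDr !mulrA.
- rewrite addSnnS E2 -addrA; congr (_ + _).
  rewrite [(Dn * M) ^+ k.+1]exprSr addSn [M ^+ (m + P)%N.+1]exprS.
  by rewrite -[X in _ * (X * _) = _](mul1r M) -HD !mulrDl !mulrDr !mulrA.
Qed.

Lemma pow_mult n (M : 'M[nat]_n.+1) l c k :
  (0 < (M ^+ c) l l)%N -> (0 < (M ^+ (c * k)) l l)%N.
Proof.
move=> H; elim: k => [|k IH]; first by rewrite muln0 expr0 oneE eqxx.
by rewrite mulnS exprD; apply: (mul_pos (l := l)).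
Qed.

Lemma common_period n (M : 'M[nat]_n.+1) :
  exists P, (0 < P)%N /\ forall l, (exists c, (0 < c)%N /\ (0 < (M ^+ c) l l)%N) ->
    (0 < (M ^+ P) l l)%N.
Proof.
suff : forall s : seq 'I_n.+1, exists P, (0 < P)%N /\ forall l, l \in s ->
    (exists c, (0 < c)%N /\ (0 < (M ^+ c) l l)%N) -> (0 < (M ^+ P) l l)%N.
  move=> /(_ (enum 'I_n.+1)) [P [P0 HP]]; exists P; split => // l; apply: HP.
  by rewrite mem_enum.
elim => [|l s [P [P0 HP]]]; first by exists 1%N.
case: (classic (exists c, (0 < c)%N /\ (0 < (M ^+ c) l l)%N)) => [[c [c0 Hc]]|Hn].
  exists (c * P)%N; split; first by rewrite muln_gt0 c0.
  move=> l'; rewrite inE => /orP [/eqP -> _|Hl' Hc']; first exact: pow_mult.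
  rewrite mulnC; apply: pow_mult; exact: HP.
exists P; split => // l'; rewrite inE => /orP [/eqP -> //|Hl']; exact: HP.
Qed.

Definition dg n (b : 'I_n.+1 -> bool) : 'M[nat]_n.+1 := diag_mx (\row_i (b i : nat)).

Lemma dgE n (b : 'I_n.+1 -> bool) (i j : 'I_n.+1) : dg b i j = ((i == j) && b i : nat).
Proof. rewrite /dg !mxE; by case: (i == j); case: (b i). Qed.

Lemma dg_mulE n (b : 'I_n.+1 -> bool) (A : 'M[nat]_n.+1) i j :
  (dg b * A) i j = (b i * A i j)%N.
Proof. by rewrite -mulmxE /dg mul_diag_mx !mxE. Qed.

Lemma key n (M : 'M[nat]_n.+1) : exists P, (0 < P)%N /\
  forall m, mxle (M ^+ (n.+1 + m)) (M ^+ (n.+1 + m + P)).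
Proof.
have [P [P0 HP]] := common_period M.
pose cyc l := exists c, (0 < c)%N /\ (0 < (M ^+ c) l l)%N.
pose cb l := if excluded_middle_informative (cyc l) then true else false.
have cbP l : cb l <-> cyc l.
  by rewrite /cb; case: excluded_middle_informative.
pose Dc := dg cb; pose Dn := dg (fun l => ~~ cb l).
have HD : Dc + Dn = 1.
  apply/matrixP => i j; rewrite mxE !dgE oneE.
  by case: (i == j); case: (cb i).
have HPc : mxle Dc (Dc * M ^+ P).
  move=> i j; rewrite dg_mulE dgE.
  case: eqP => [<-|]; last by [].
  case Ei: (cb i) => //=; rewrite mul1n; apply: HP; apply/cbP; by rewrite Ei.
have Hnil : (Dn * M) ^+ n.+1 = 0.
  apply: nilp => l c c0; apply/eqP; rewrite -leqn0 leqNgt; apply/negP => Hp.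
  have Hle : mxle (Dn * M) M.
    move=> i j; rewrite dg_mulE; by case: (cb i); rewrite ?mul0n ?mul1n.
  have Hc : cyc l.
    exists c; split => //; exact: leq_trans Hp (mxle_pow c Hle l l).
  move: Hp; rewrite -(prednK c0) exprS => /pos_mul [k [Hk _]].
  move: Hk; rewrite dg_mulE.
  have : cb l by apply/cbP.
  by move=> ->.
exists P; split => // m.
have [S [S' [HS E1 E2]]] := invariant HD HPc n.+1 m.
by rewrite E1 E2 Hnil !mul0r !addr0.
Qed.

Lemma iter_key n (M : 'M[nat]_n.+1) P :
  (forall m, mxle (M ^+ (n.+1 + m)) (M ^+ (n.+1 + m + P))) ->
  forall t m, mxle (M ^+ (n.+1 + m)) (M ^+ (n.+1 + m + t * P)).
Proof.
move=> H; elim => [|t IH] m; first by rewrite mul0n addn0; exact: mxle_refl.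
move=> i j; apply: leq_trans (IH m i j) _.
have h := H (m + t * P)%N i j; rewrite !addnA in h; apply: leq_trans h _.
have -> : (n.+1 + m + t.+1 * P = n.+1 + m + t * P + P)%N by rewrite mulSn; lia.
exact: leqnn.
Qed.

Theorem mainTheorem1 :
  ~ exists x : nat -> nat,
      N_rational x /\ (forall n : nat, (0 < n)%N -> (x (9 * n + 2) < x (8 * n + 1))%N).
Proof.
move=> [x [[d [M [v [w Hx]]]] Hlt]].
have [P [P0 HP]] := key M.
pose t := d.+2.
pose n := (t * P).-1.
have tP : (2 <= t * P)%N by rewrite /t (leq_trans _ (leq_pmulr _ P0)).
have n1 : (0 < n)%N by rewrite /n -subn1 subn_gt0.
have nK : (d.+1 <= 8 * n + 1)%N.
  rewrite /n (leq_trans _ (leq_addr _ _)) // (leq_trans _ (leq_pmull _ _)) //.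
  rewrite -ltnS prednK; last exact: ltnW.
  exact: leq_trans (leq_pmulr _ P0).
have E9 : (9 * n + 2 = d.+1 + (8 * n + 1 - d.+1) + t * P)%N.
  rewrite subnKC // /n -{3}(prednK (ltnW tP)); lia.
have := Hlt n n1.
rewrite Hx; last by rewrite addn2.
rewrite Hx; last by rewrite addn1.
rewrite E9 -{2}(subnKC nK).
move: (iter_key HP t (8 * n + 1 - d.+1)%N) => Hm.
have := mxle_mul (mxle_mul (mxle_refl v) Hm) (mxle_refl w) ord0 ord0.
by move=> h; rewrite ltnNge h.
Qed.
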